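(* Let $H$ be a Hilbert space and $T$ a densely defined closed operator on $H$ with closed range. The following are equivalent: (1) $T$ is selfadjoint; (2) $T=\overline{w(T^{*})T}\,T^{*}$; (3) $T^{*}=TT^{*}w(T)$.
   Context: For a densely defined closed operator $A$ with closed range, $A^{*}$ is its adjoint, $C(A)=D(A)\cap N(A)^{\perp}$, and the Moore–Penrose inverse $A^{\dagger}$ is defined on $R(A)\oplus^{\perp}R(A)^{\perp}$ by $A^{\dagger}y=(A|_{C(A)})^{-1}y$ for $y\in R(A)$ and $A^{\dagger}y=0$ for $y\in R(A)^{\perp}$. The generalized Cauchy dual is $w(A)=A(A^{*}A)^{\dagger}$; products of operators are on natural domains, and $\overline{B}$ is the closure of a closable operator $B$. *)

(* Defs.v *)
(* Unbounded (partially defined) linear operators on a Hilbert space are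
   represented by their graphs, i.e. relations  A : V -> V -> Prop
   (A x y  <->  x \in D(A) and A x = y).  *)
From mathcomp Require Import all_boot all_algebra.
From mathcomp Require Import complex.
From mathcomp Require Import reals.
Set Implicit Arguments.
Unset Strict Implicit.
Unset Printing Implicit Defensive.
Import GRing.Theory Num.Theory.
Local Open Scope ring_scope.
Local Open Scope complex_scope.

Section Hilbert.
Variables (R : realType) (V : lmodType R[i]).

Record is_inner_product (ip : V -> V -> R[i]) : Prop := IsInnerProduct {
  ip_linear : forall (a : R[i]) (x y z : V), ip (a *: x + y) z = a * ip x z + ip y z;
  ip_conj : forall x y : V, ip y x = (ip x y)^*;
  ip_ge0 : forall x : V, 0 <= ip x x;
  ip_eq0 : forall x : V, ip x x = 0 -> x = 0
}.

Definition op := V -> V -> Prop.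

Definition op_eq (A B : op) : Prop := forall x y, A x y <-> B x y.

Definition dom (A : op) : V -> Prop := fun x => exists y, A x y.
Definition range (A : op) : V -> Prop := fun y => exists x, A x y.
Definition kernel (A : op) : V -> Prop := fun x => A x 0.

Definition linear_op (A : op) : Prop :=
  A 0 0 /\
  (forall x y x' y', A x y -> A x' y' -> A (x + x') (y + y')) /\
  (forall (a : R[i]) x y, A x y -> A (a *: x) (a *: y)) /\
  (forall x y y', A x y -> A x y' -> y = y').

Definition op_mul (A B : op) : op := fun x z => exists y, B x y /\ A y z.

Variable ip : V -> V -> R[i].

Definition nsq (x : V) : R[i] := ip x x.

Definition converges_to (u : nat -> V) (x : V) : Prop :=
  forall e : R[i], 0 < e -> exists N : nat, forall n : nat, (N <= n)%N -> nsq (u n - x) < e.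

Definition cauchy_seq (u : nat -> V) : Prop :=
  forall e : R[i], 0 < e -> exists N : nat, forall n m : nat,
    (N <= n)%N -> (N <= m)%N -> nsq (u n - u m) < e.

Definition is_hilbert : Prop :=
  is_inner_product ip /\ forall u : nat -> V, cauchy_seq u -> exists x, converges_to u x.

(* sets: closed, dense (norm topology; sequential = topological in a metric space) *)
Definition closed_set (S : V -> Prop) : Prop :=
  forall (u : nat -> V) (x : V), (forall n, S (u n)) -> converges_to u x -> S x.

Definition dense_set (S : V -> Prop) : Prop :=
  forall x : V, exists u : nat -> V, (forall n, S (u n)) /\ converges_to u x.

Definition perp (S : V -> Prop) : V -> Prop :=
  fun y => forall x, S x -> ip x y = 0.

Definition densely_defined (A : op) : Prop := dense_set (dom A).

Definition closed_graph (A : op) : Prop :=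
  forall (u v : nat -> V) (x y : V),
    (forall n, A (u n) (v n)) -> converges_to u x -> converges_to v y -> A x y.

Definition closed_op (A : op) : Prop := linear_op A /\ closed_graph A.

Definition closed_range (A : op) : Prop := closed_set (range A).

Definition adjoint (A : op) : op :=
  fun y z => forall x w, A x w -> ip w y = ip x z.

Definition closure_op (A : op) : op :=
  fun x y => exists u v : nat -> V,
    (forall n, A (u n) (v n)) /\ converges_to u x /\ converges_to v y.

(* Moore-Penrose inverse: defined on R(A) (+) R(A)^perp,
   A^+ (y1 + y2) = (A|_{C(A)})^{-1} y1  for y1 in R(A), y2 in R(A)^perp,
   where C(A) = D(A) /\ N(A)^perp. *)
Definition mp_inverse (A : op) : op :=
  fun y z => exists y1 y2, y = y1 + y2 /\ range A y1 /\ perp (range A) y2 /\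
                           A z y1 /\ perp (kernel A) z.

Definition cauchy_dual (A : op) : op :=
  op_mul A (mp_inverse (op_mul (adjoint A) A)).

Definition selfadjoint (A : op) : Prop := op_eq A (adjoint A).

End Hilbert.

(* Main.v *)
Require Import Defs.
From mathcomp Require Import all_boot all_order all_algebra complex reals.
From mathcomp Require Import ring lra.
From Stdlib Require Import ClassicalEpsilon Classical.
Set Implicit Arguments.
Unset Strict Implicit.
Unset Printing Implicit Defensive.
Import Order.TTheory GRing.Theory Num.Theory.
Local Open Scope ring_scope.
Local Open Scope complex_scope.

Notation cRe := (@complex.Re _).
Notation cIm := (@complex.Im _).


Lemma fchoice (A B : Type) (P : A -> B -> Prop) :
  (forall a, exists b, P a b) -> exists f : A -> B, forall a, P a (f a).
Proof.
move=> h; exists (fun a => proj1_sig (constructive_indefinite_description _ (h a))).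
by move=> a; exact: (proj2_sig (constructive_indefinite_description _ (h a))).
Qed.

Section Gen.
Variables (R : realType) (W : lmodType R[i]) (ip : W -> W -> R[i]).
Hypothesis Hip : is_inner_product ip.
Local Notation normc := (@Normc.normc R).

Lemma ipDl x y z : ip (x + y) z = ip x z + ip y z.
Proof. by have := ip_linear Hip 1 x y z; rewrite scale1r mul1r. Qed.

Lemma ip0l z : ip 0 z = 0.
Proof. have := ipDl 0 0 z; rewrite addr0 => h. by apply: (addrI (ip 0 z)); rewrite addr0 -h. Qed.

Lemma ipZl a x z : ip (a *: x) z = a * ip x z.
Proof. by have := ip_linear Hip a x 0 z; rewrite addr0 ip0l addr0. Qed.

Lemma ipNl x z : ip (- x) z = - ip x z.
Proof. by rewrite -scaleN1r ipZl mulN1r. Qed.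

Lemma ipBl x y z : ip (x - y) z = ip x z - ip y z.
Proof. by rewrite ipDl ipNl. Qed.

Lemma ipC x y : ip y x = (conjc (ip x y)).
Proof. exact: ip_conj. Qed.

Lemma ipDr x y z : ip x (y + z) = ip x y + ip x z.
Proof. by rewrite !(ipC _ x) ipDl rmorphD. Qed.

Lemma ipZr a x z : ip x (a *: z) = (conjc a) * ip x z.
Proof. by rewrite !(ipC _ x) ipZl rmorphM. Qed.

Lemma ip0r z : ip z 0 = 0.
Proof. by rewrite ipC ip0l conjc0. Qed.

Lemma ipNr x z : ip x (- z) = - ip x z.
Proof. by rewrite !(ipC _ x) ipNl rmorphN. Qed.

Lemma ipBr x y z : ip x (y - z) = ip x y - ip x z.
Proof. by rewrite ipDr ipNr. Qed.

Definition nn x : R := cRe (ip x x).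
Definition m2 (p : R[i]) : R := cRe p ^+ 2 + cIm p ^+ 2.

Lemma ipxx x : ip x x = (nn x)%:C.
Proof.
have := ip_ge0 Hip x; rewrite lecE /= => /andP[/eqP h _].
by rewrite /nn; case: (ip x x) h => a b /= ->.
Qed.

Lemma nn_ge0 x : 0 <= nn x.
Proof. by have := ip_ge0 Hip x; rewrite ipxx lecR. Qed.

Lemma nn_eq0 x : nn x = 0 -> x = 0.
Proof. by move=> h; apply: (ip_eq0 Hip); rewrite ipxx h. Qed.

Lemma mulcJ (p : R[i]) : p * (conjc p) = (m2 p)%:C.
Proof. case: p => a b; rewrite /m2 /=. apply/eqP; rewrite eq_complex /=; apply/andP; split; apply/eqP; ring. Qed.

Lemma m2_ge0 p : 0 <= m2 p.
Proof. by rewrite /m2 addr_ge0 // sqr_ge0. Qed.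

Lemma m2_eq0 p : m2 p = 0 -> p = 0.
Proof.
case: p => a b; rewrite /m2 /= => h.
have ha : a ^+ 2 = 0 by apply/eqP; rewrite eq_le sqr_ge0 andbT -h lerDl sqr_ge0.
have hb : b ^+ 2 = 0 by move: h; rewrite ha add0r.
by move/eqP: ha; rewrite sqrf_eq0 => /eqP->; move/eqP: hb; rewrite sqrf_eq0 => /eqP->.
Qed.

Lemma ip_expand x y c :
  ip (x + c *: y) (x + c *: y) = ip x x + c * ip y x + (conjc c) * ip x y + c * (conjc c) * ip y y.
Proof. rewrite !ipDl !ipDr !ipZl !ipZr; ring. Qed.

Lemma cjN (a : R[i]) : (conjc (- a)) = - (conjc a).
Proof. by case: a => a1 a2; apply/eqP; rewrite eq_complex /= !eqxx. Qed.
Lemma cjM (a b : R[i]) : (conjc (a * b)) = (conjc a) * (conjc b).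
Proof. by case: a b => [a1 a2] [b1 b2]; apply/eqP; rewrite eq_complex /=; apply/andP; split; apply/eqP; ring. Qed.
Lemma cjD (a b : R[i]) : (conjc (a + b)) = (conjc a) + (conjc b).
Proof. by case: a b => [a1 a2] [b1 b2]; apply/eqP; rewrite eq_complex /=; apply/andP; split; apply/eqP; ring. Qed.
Lemma cjR (r : R) : (conjc (r%:C)) = r%:C.
Proof. by apply/eqP; rewrite eq_complex /= oppr0 !eqxx. Qed.
Lemma cjK (a : R[i]) : (conjc ((conjc a))) = a.
Proof. by case: a => a1 a2; apply/eqP; rewrite eq_complex /= opprK !eqxx. Qed.
Lemma cRD (a b : R) : (a + b)%:C = a%:C + b%:C :> R[i].
Proof. by apply/eqP; rewrite eq_complex /= addr0 !eqxx. Qed.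
Lemma cRM (a b : R) : (a * b)%:C = a%:C * b%:C :> R[i].
Proof. by apply/eqP; rewrite eq_complex /=; apply/andP; split; apply/eqP; ring. Qed.
Lemma cRN (a : R) : (- a)%:C = - a%:C :> R[i].
Proof. by apply/eqP; rewrite eq_complex /= oppr0 !eqxx. Qed.
Lemma cR1 : (1 : R)%:C = 1 :> R[i]. Proof. by []. Qed.
Lemma cR0 : (0 : R)%:C = 0 :> R[i]. Proof. by []. Qed.
Lemma cRB (a b : R) : (a - b)%:C = a%:C - b%:C :> R[i].
Proof. by rewrite cRD cRN. Qed.

Lemma nn_expand x y c :
  (nn (x + c *: y))%:C = (nn x)%:C + c * (conjc (ip x y)) + (conjc c) * ip x y + c * (conjc c) * (nn y)%:C.
Proof. by rewrite -ipxx ip_expand !ipxx (ipC x y). Qed.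

Lemma CS_m2 x y : m2 (ip x y) <= nn x * nn y.
Proof.
set p := ip x y.
have key t : 0 <= nn x - 2 * t * m2 p + t ^+ 2 * m2 p * nn y.
  have E : (nn (x + (- (t%:C * p)) *: y))%:C = (nn x - 2 * t * m2 p + t ^+ 2 * m2 p * nn y)%:C.
    rewrite nn_expand -/p cjN cjM cjR.
    have -> : (nn x)%:C + - (t%:C * p) * (conjc p) + - (t%:C * (conjc p)) * p +
      - (t%:C * p) * - (t%:C * (conjc p)) * (nn y)%:C
      = (nn x)%:C - (1 + 1) * t%:C * (p * (conjc p)) + t%:C * t%:C * (p * (conjc p)) * (nn y)%:C by ring.
    rewrite mulcJ cRD cRB !cRM.
    have -> : (2:R)%:C = 1 + 1 :> R[i] by rewrite -cRD.
    by [].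
  by rewrite -(complexI E) nn_ge0.
have [hy|hy] := eqVneq (nn y) 0.
  have /nn_eq0 y0 := hy; by rewrite /p hy mulr0 y0 ip0r /m2 /= expr0n /= addr0.
have ny : 0 < nn y by rewrite lt_def hy nn_ge0.
have := key (nn y)^-1.
have -> : nn x - 2 * (nn y)^-1 * m2 p + (nn y)^-1 ^+ 2 * m2 p * nn y
   = nn x - (nn y)^-1 * m2 p.
  by field; rewrite hy.
rewrite subr_ge0 ler_pdivrMl //.
by rewrite mulrC.
Qed.


Lemma nn_var x y t :
  nn (x + (- (t%:C * ip x y)) *: y) = nn x - 2 * t * m2 (ip x y) + t ^+ 2 * m2 (ip x y) * nn y.
Proof.
set p := ip x y.
suff E : (nn (x + (- (t%:C * p)) *: y))%:C = (nn x - 2 * t * m2 p + t ^+ 2 * m2 p * nn y)%:C.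
  exact: complexI E.
rewrite nn_expand -/p cjN cjM cjR.
have -> : (nn x)%:C + - (t%:C * p) * (conjc p) + - (t%:C * (conjc p)) * p +
  - (t%:C * p) * - (t%:C * (conjc p)) * (nn y)%:C
  = (nn x)%:C - (1 + 1) * t%:C * (p * (conjc p)) + t%:C * t%:C * (p * (conjc p)) * (nn y)%:C by ring.
rewrite mulcJ cRD cRB !cRM.
have -> : (2:R)%:C = 1 + 1 :> R[i] by rewrite -cRD.
by [].
Qed.

Definition nrm x : R := Num.sqrt (nn x).

Lemma nrm_ge0 x : 0 <= nrm x. Proof. exact: sqrtr_ge0. Qed.
Lemma nrm2 x : nrm x ^+ 2 = nn x. Proof. by rewrite sqr_sqrtr // nn_ge0. Qed.
Lemma nrm_eq0 x : nrm x = 0 -> x = 0.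
Proof. by move=> h; apply: nn_eq0; rewrite -nrm2 h expr0n. Qed.
Lemma nrm0 : nrm 0 = 0.
Proof. by rewrite /nrm /nn ip0l /= sqrtr0. Qed.

Lemma normc_m2 p : normc p = Num.sqrt (m2 p).
Proof. by case: p. Qed.

Lemma CS x y : normc (ip x y) <= nrm x * nrm y.
Proof. by rewrite normc_m2 /nrm -sqrtrM ?nn_ge0 // ler_wsqrtr // CS_m2. Qed.

Lemma Re_le_normc p : cRe p <= normc p.
Proof.
rewrite normc_m2 (le_trans (ler_norm _)) // -sqrtr_sqr ler_wsqrtr //.
by rewrite /m2 lerDl sqr_ge0.
Qed.

Lemma normc_ge0 p : 0 <= normc p.
Proof. by rewrite normc_m2 sqrtr_ge0. Qed.

Lemma normc_eq0 p : normc p = 0 -> p = 0.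
Proof. by move=> h; apply: m2_eq0; move: h; rewrite normc_m2 => /eqP; rewrite sqrtr_eq0 => h; apply/eqP; rewrite eq_le h m2_ge0. Qed.

Lemma ReD (a b : R[i]) : cRe (a + b) = cRe a + cRe b. Proof. by case: a b => [? ?] [? ?]. Qed.
Lemma Re_conj (a : R[i]) : cRe (conjc a) = cRe a. Proof. by case: a. Qed.

Lemma nnD x y : nn (x + y) = nn x + nn y + 2 * cRe (ip x y).
Proof.
rewrite /nn ipDl !ipDr (ipC x y) !ReD Re_conj. 
rewrite -[2]/(1 + 1) mulrDl mul1r; ring.
Qed.

Lemma nrmD x y : nrm (x + y) <= nrm x + nrm y.
Proof.
have h : nn (x + y) <= (nrm x + nrm y) ^+ 2.
  rewrite nnD sqrrD !nrm2 mulr2n.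
  have := le_trans (Re_le_normc (ip x y)) (CS x y); lra.
have := nrm_ge0 (x + y); have := nrm_ge0 x; have := nrm_ge0 y.
rewrite -nrm2 in h; nra.
Qed.

Lemma nnN x : nn (- x) = nn x.
Proof. by rewrite /nn ipNl ipNr opprK. Qed.
Lemma nrmN x : nrm (- x) = nrm x.
Proof. by rewrite /nrm nnN. Qed.
Lemma nrmB x y : nrm (x - y) = nrm (y - x).
Proof. by rewrite -nrmN opprB. Qed.

Lemma nnZ a x : nn (a *: x) = m2 a * nn x.
Proof.
suff E : (nn (a *: x))%:C = (m2 a * nn x)%:C by exact: complexI E.
by rewrite -!ipxx ipZl ipZr mulrA mulcJ cRM ipxx.
Qed.
Lemma nrmZ a x : nrm (a *: x) = normc a * nrm x.
Proof. by rewrite /nrm nnZ sqrtrM ?m2_ge0 // normc_m2. Qed.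

Lemma normcR (r : R) : normc r%:C = `|r|.
Proof. by rewrite normc_m2 /m2 /= expr0n /= addr0 sqrtr_sqr. Qed.

Lemma normcB (a b : R[i]) : normc (a - b) <= normc a + normc b.
Proof. by rewrite (le_trans (le_normcD _ _)) // normcN. Qed.


Lemma nsq_nn x : nsq ip x = (nn x)%:C.
Proof. exact: ipxx. Qed.

Definition cv (u : nat -> W) x := forall e : R, 0 < e ->
  exists N, forall n, (N <= n)%N -> nrm (u n - x) < e.
Definition cauchy (u : nat -> W) := forall e : R, 0 < e ->
  exists N, forall n m, (N <= n)%N -> (N <= m)%N -> nrm (u n - u m) < e.

Lemma lt_nrm_nn x e : 0 < e -> (nrm x < e) = (nn x < e ^+ 2).
Proof.
move=> e0; rewrite -nrm2; apply/idP/idP => h.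
  by have := nrm_ge0 x; nra.
by have := nrm_ge0 x; nra.
Qed.

Lemma ltC_pos (e : R[i]) : 0 < e -> 0 < cRe e /\ e = (cRe e)%:C.
Proof.
rewrite ltcE /= => /andP[/eqP hi hr]; split => //.
by case: e hi {hr} => a b /= ->.
Qed.

Lemma nnC_lt x (e : R[i]) : 0 < e -> (nn x)%:C < e <-> nn x < cRe e.
Proof.
move=> /ltC_pos [_ ->]; rewrite ltcR /=; by [].
Qed.

Lemma cvP u x : converges_to ip u x <-> cv u x.
Proof.
split => h e e0.
  have e20 : (0 : R[i]) < (e ^+ 2)%:C by rewrite ltcE /= eqxx /= exprn_gt0.
  have [N HN] := h _ e20; exists N => n /HN.
  by rewrite nsq_nn (nnC_lt _ e20) /= lt_nrm_nn.
have [r0 ->] := ltC_pos e0.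
have sr0 : 0 < Num.sqrt (cRe e) by rewrite sqrtr_gt0.
have [N HN] := h _ sr0; exists N => n /HN.
rewrite lt_nrm_nn // sqr_sqrtr ?ltW // nsq_nn => hl.
by rewrite ltcR.
Qed.

Lemma cauchyP u : cauchy_seq ip u <-> cauchy u.
Proof.
split => h e e0.
  have e20 : (0 : R[i]) < (e ^+ 2)%:C by rewrite ltcE /= eqxx /= exprn_gt0.
  have [N HN] := h _ e20; exists N => n m /HN hn /hn.
  by rewrite nsq_nn (nnC_lt _ e20) /= lt_nrm_nn.
have [r0 ->] := ltC_pos e0.
have sr0 : 0 < Num.sqrt (cRe e) by rewrite sqrtr_gt0.
have [N HN] := h _ sr0; exists N => n m /HN hn /hn.
rewrite lt_nrm_nn // sqr_sqrtr ?ltW // nsq_nn => hl.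
by rewrite ltcR.
Qed.

Lemma small_le (a b : R) : (forall e, 0 < e -> a < b + e) -> a <= b.
Proof.
move=> h; rewrite leNgt; apply/negP => ba.
have := h (a - b); rewrite subr_gt0 => /(_ ba); lra.
Qed.

Lemma archi1 (e : R) : 0 < e -> exists N : nat, forall n, (N <= n)%N -> (n.+1%:R)^-1 < e.
Proof.
move=> e0; exists (Num.truncn e^-1) => n hn.
have h1 := truncnS_gt e^-1.
have h2 : (Num.truncn e^-1).+1%:R <= n.+1%:R :> R by rewrite ler_nat ltnS.
rewrite invf_plt ?posrE // ?ltr0n //.
exact: lt_le_trans h1 h2.
Qed.

Lemma cv_uniq u x y : cv u x -> cv u y -> x = y.
Proof.
move=> hx hy; apply/eqP; rewrite -subr_eq0; apply/eqP; apply: nrm_eq0; apply/eqP; rewrite eq_le nrm_ge0 andbT.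
apply: small_le => e e0; rewrite add0r.
have e2 : 0 < e / 2 by rewrite divr_gt0.
have [N1 H1] := hx _ e2; have [N2 H2] := hy _ e2.
have a1 := H1 (maxn N1 N2) (leq_maxl _ _).
have a2 := H2 (maxn N1 N2) (leq_maxr _ _).
have : nrm (x - y) <= nrm (x - u (maxn N1 N2)) + nrm (u (maxn N1 N2) - y).
  by have := nrmD (x - u (maxn N1 N2)) (u (maxn N1 N2) - y); rewrite addrA subrK.
rewrite nrmB in a1; lra.
Qed.

Lemma cvD u v x y : cv u x -> cv v y -> cv (fun n => u n + v n) (x + y).
Proof.
move=> hx hy e e0.
have e2 : 0 < e / 2 by rewrite divr_gt0.
have [N1 H1] := hx _ e2; have [N2 H2] := hy _ e2.
exists (maxn N1 N2) => n hn.
have a1 := H1 n (leq_trans (leq_maxl _ _) hn).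
have a2 := H2 n (leq_trans (leq_maxr _ _) hn).
have : nrm (u n + v n - (x + y)) <= nrm (u n - x) + nrm (v n - y).
  by have := nrmD (u n - x) (v n - y); rewrite addrACA opprD.
lra.
Qed.

Lemma cvZ a u x : cv u x -> cv (fun n => a *: u n) (a *: x).
Proof.
move=> hx e e0.
have na := normc_ge0 a.
have e2 : 0 < e / (normc a + 1) by rewrite divr_gt0 // ltr_wpDl.
have [N H] := hx _ e2; exists N => n /H hn.
rewrite -scalerBr nrmZ.
have := nrm_ge0 (u n - x).
have : normc a * (e / (normc a + 1)) < e.
  rewrite mulrA ltr_pdivrMr ?ltr_wpDl //; nra.
nra.
Qed.

Lemma cv_const x : cv (fun _ => x) x.
Proof. by move=> e e0; exists 0%N => n _; rewrite subrr nrm0. Qed.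

Lemma cv_ext u v x : (forall n, u n = v n) -> cv u x -> cv v x.
Proof. by move=> e h eps /h [N HN]; exists N => n /HN; rewrite e. Qed.

Lemma cvN u x : cv u x -> cv (fun n => - u n) (- x).
Proof.
move=> h; have := cvZ (-1) h; rewrite scaleN1r.
by apply: cv_ext => n; rewrite scaleN1r.
Qed.

Lemma cvB u v x y : cv u x -> cv v y -> cv (fun n => u n - v n) (x - y).
Proof. by move=> hu hv; apply: cvD hu (cvN hv). Qed.

Lemma cv_cauchy u x : cv u x -> cauchy u.
Proof.
move=> hx e e0.
have e2 : 0 < e / 2 by rewrite divr_gt0.
have [N H] := hx _ e2; exists N => n m hn hm.
have a1 := H n hn; have a2 := H m hm.
have : nrm (u n - u m) <= nrm (u n - x) + nrm (x - u m).
  by have := nrmD (u n - x) (x - u m); rewrite addrA subrK.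
rewrite nrmB in a2; lra.
Qed.

Definition cvc (c : nat -> R[i]) (l : R[i]) := forall e : R, 0 < e ->
  exists N, forall n, (N <= n)%N -> normc (c n - l) < e.

Lemma normcB_sym (a b : R[i]) : normc (a - b) = normc (b - a).
Proof. by rewrite -normcN opprB. Qed.

Lemma normc_tri (a b c : R[i]) : normc (a - c) <= normc (a - b) + normc (b - c).
Proof. by have := le_normcD (a - b) (b - c); rewrite addrA subrK. Qed.

Lemma cvc_uniq c l l' : cvc c l -> cvc c l' -> l = l'.
Proof.
move=> hx hy; apply/eqP; rewrite -subr_eq0; apply/eqP; apply: normc_eq0; apply/eqP; rewrite eq_le normc_ge0 andbT.
apply: small_le => e e0; rewrite add0r.
have e2 : 0 < e / 2 by rewrite divr_gt0.
have [N1 H1] := hx _ e2; have [N2 H2] := hy _ e2.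
have a1 := H1 (maxn N1 N2) (leq_maxl _ _).
have a2 := H2 (maxn N1 N2) (leq_maxr _ _).
have := normc_tri l (c (maxn N1 N2)) l'.
rewrite normcB_sym in a1; lra.
Qed.

Lemma cvc_ext c d l : (forall n, c n = d n) -> cvc c l -> cvc d l.
Proof. by move=> e h eps /h [N HN]; exists N => n /HN; rewrite e. Qed.

Lemma cvc_le c l k : cvc c l -> (forall n, normc (c n) <= k) -> normc l <= k.
Proof.
move=> h hk; apply: small_le => e /h [N HN].
have := HN N (leqnn N); have := hk N.
have := normc_tri l (c N) 0; rewrite !subr0 normcB_sym; lra.
Qed.

Lemma cv_ipr u x y : cv u x -> cvc (fun n => ip y (u n)) (ip y x).
Proof.
move=> hx e e0.
have e2 : 0 < e / (nrm y + 1) by rewrite divr_gt0 // ltr_wpDl // nrm_ge0.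
have [N H] := hx _ e2; exists N => n /H hn.
rewrite -ipBr (le_lt_trans (CS _ _)) //.
have := nrm_ge0 (u n - x); have := nrm_ge0 y.
have : nrm y * (e / (nrm y + 1)) < e.
  rewrite mulrA ltr_pdivrMr ?ltr_wpDl ?nrm_ge0 //; nra.
nra.
Qed.

Lemma normc_conj p : normc (conjc p) = normc p.
Proof. by case: p => a b /=; rewrite sqrrN. Qed.

Lemma cv_ipl u x y : cv u x -> cvc (fun n => ip (u n) y) (ip x y).
Proof.
move=> /(cv_ipr y) h e /h [N HN]; exists N => n /HN.
by rewrite -ipBr -ipBl (ipC y) normc_conj.
Qed.


Definition subspace (S : W -> Prop) :=
  S 0 /\ (forall a b, S a -> S b -> S (a + b)) /\ (forall c a, S a -> S (c *: a)).

Lemma nn_par a b : nn (a - b) + nn (a + b) = 2 * nn a + 2 * nn b.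
Proof. rewrite !nnD nnN ipNr; case: (ip a b) => p q /=; ring. Qed.

Lemma nn_twice z : nn (z + z) = 4 * nn z.
Proof. rewrite nnD /nn; ring. Qed.

Lemma half_sum (a b : W) : (2^-1 : R[i]) *: (a + b) + (2^-1 : R[i]) *: (a + b) = a + b.
Proof.
rewrite -scalerDl.
have -> : (2^-1 + 2^-1 : R[i]) = 1.
  by field.
by rewrite scale1r.
Qed.

Lemma proj_thm (Hc : forall u, cauchy u -> exists x, cv u x) (S : W -> Prop) :
  subspace S -> closed_set ip S -> forall x, exists s, S s /\ perp ip S (x - s).
Proof.
move=> [S0 [SD SZ]] Scl x.
pose E := fun r => exists s, S s /\ r = nrm (x - s).
have hlb : classical_sets.lbound E 0 by move=> r [s [_ ->]]; exact: nrm_ge0.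
have hne : classical_sets.nonempty E by exists (nrm (x - 0)); exists 0.
have hinf : classical_sets.has_inf E by split => //; exists 0.
pose d := inf E.
have dle s : S s -> d <= nrm (x - s).
  by move=> Ss; apply: (ge_inf (proj2 hinf)); exists s.
have d0 : 0 <= d by apply: lb_le_inf.
have ex n : exists s, S s /\ nrm (x - s) < d + (n.+1%:R)^-1.
  have en : 0 < (n.+1%:R)^-1 :> R by rewrite invr_gt0 ltr0Sn.
  have [r [s [Ss ->]] hr] := inf_adherent en hinf.
  by exists s.
have [sq Hsq] := fchoice ex.
have cau : cauchy sq.
  move=> e e0.
  pose dl := e ^+ 2 / (8 * d + 4 + e ^+ 2).
  have den : 0 < 8 * d + 4 + e ^+ 2 by have := exprn_gt0 2 e0; lra.
  have dl0 : 0 < dl by rewrite divr_gt0 // exprn_gt0.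
  have dl1 : dl < 1 by rewrite ltr_pdivrMr // mul1r; lra.
  have dl2 : (8 * d + 4) * dl < e ^+ 2.
    rewrite /dl mulrA ltr_pdivrMr //.
    have := exprn_gt0 2 e0; nra.
  have [N HN] := archi1 dl0.
  exists N => n m hn hm.
  rewrite lt_nrm_nn // -nrm2 nrmB.
  have := nn_par (x - sq n) (x - sq m).
  have -> : x - sq n - (x - sq m) = sq m - sq n by rewrite opprB addrC addrA subrK.
  have -> : x - sq n + (x - sq m) = (x - (2^-1 : R[i]) *: (sq n + sq m)) + (x - (2^-1 : R[i]) *: (sq n + sq m)).
    by rewrite [RHS]addrACA -opprD half_sum [LHS]addrACA opprD.
  rewrite nn_twice -!nrm2 => hp.
  have hmid := dle _ (SZ (2^-1 : R[i]) _ (SD _ _ (proj1 (Hsq n)) (proj1 (Hsq m)))).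
  have hn1 := proj2 (Hsq n); have hm1 := proj2 (Hsq m).
  have hn2 := HN n hn; have hm2 := HN m hm.
  have A0 := nrm_ge0 (x - sq n); have B0 := nrm_ge0 (x - sq m).
  have hA1 : nrm (x - sq n) <= d + dl by apply: ltW; apply: lt_trans hn1 _; rewrite ltrD2l.
  have hB1 : nrm (x - sq m) <= d + dl by apply: ltW; apply: lt_trans hm1 _; rewrite ltrD2l.
  have hA : nrm (x - sq n) ^+ 2 <= (d + dl) ^+ 2 by nra.
  have hB : nrm (x - sq m) ^+ 2 <= (d + dl) ^+ 2 by nra.
  have hM : d ^+ 2 <= nrm (x - (2^-1 : R[i]) *: (sq n + sq m)) ^+ 2 by nra.
  have hdl : dl ^+ 2 <= dl by nra.
  nra.
have [s hs] := Hc _ cau.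
have Ss : S s by apply: (Scl sq) => //; [move=> n; exact: proj1 (Hsq n) | exact/cvP].
have hmin : nrm (x - s) <= d.
  apply: small_le => e e0.
  have e2 : 0 < e / 2 by rewrite divr_gt0.
  have [N1 H1] := hs _ e2; have [N2 H2] := archi1 e2.
  have a1 := H1 (maxn N1 N2) (leq_maxl _ _).
  have a2 := H2 (maxn N1 N2) (leq_maxr _ _).
  have a3 := proj2 (Hsq (maxn N1 N2)).
  have := nrmD (x - sq (maxn N1 N2)) (sq (maxn N1 N2) - s).
  rewrite addrA subrK; move: a2 a3; move: ((maxn N1 N2).+1%:R^-1) => en; lra.
exists s; split => // t St.
set z := x - s.
set q := ip z t.
have nt := nn_ge0 t.
pose tau := (nn t + 1)^-1.
have tau0 : 0 < tau by rewrite invr_gt0; lra.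
have taueq : tau * (nn t + 1) = 1 by rewrite mulVf //; apply/eqP; lra.
have hle : nn z <= nn (z + (- (tau%:C * q)) *: t).
  have -> : z + (- (tau%:C * q)) *: t = x - (s + (tau%:C * q) *: t).
    by rewrite /z scaleNr opprD addrA.
  have := dle _ (SD _ _ Ss (SZ (tau%:C * q) _ St)).
  have := nrm_ge0 z; rewrite -!nrm2 -/z => h0 h1.
  have := nrm_ge0 (x - (s + (tau%:C * q) *: t)); nra.
rewrite nn_var -/q in hle.
have m0 := m2_ge0 q.
have hq : m2 q = 0.
  apply/eqP; rewrite eq_le m0 andbT.
  clearbody tau.
  have h1 : tau * nn t < 1 by nra.
  have h2 : 0 <= tau * m2 q by rewrite mulr_ge0 // ltW.
  have h3 : 0 <= tau * m2 q * (1 - tau * nn t) by rewrite mulr_ge0 // subr_ge0 ltW.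
  have h4 : tau * m2 q <= 0 by nra.
  by rewrite -(pmulr_rle0 _ tau0).
by rewrite ipC -/q (m2_eq0 hq) conjc0.
Qed.


Lemma cv_inv u x : (forall n, nrm (u n - x) < (n.+1%:R)^-1) -> cv u x.
Proof.
move=> h e e0; have [N HN] := archi1 e0; exists N => n hn.
exact: lt_trans (h n) (HN n hn).
Qed.

Lemma closed_nbhs (S : W -> Prop) v : closed_set ip S -> ~ S v ->
  exists rho, 0 < rho /\ forall w, nrm (w - v) < rho -> ~ S w.
Proof.
move=> Scl nS; apply: NNPP => hn.
have ex n : exists w, nrm (w - v) < (n.+1%:R)^-1 /\ S w.
  apply: NNPP => hw; apply: hn; exists (n.+1%:R)^-1; split.
    by rewrite invr_gt0 ltr0Sn.
  by move=> w h1 h2; apply: hw; exists w.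
have [f Hf] := fchoice ex.
apply: nS; apply: (Scl f) => [n|]; first exact: proj2 (Hf n).
by apply/cvP; apply: cv_inv => n; exact: proj1 (Hf n).
Qed.

Lemma baire (Hc : forall u, cauchy u -> exists x, cv u x) (E : nat -> W -> Prop) :
  (forall k, closed_set ip (E k)) -> (forall v, exists k, E k v) ->
  exists k v0 r, 0 < r /\ forall v, nrm (v - v0) < r -> E k v.
Proof.
move=> Ecl Ecov; apply: NNPP => Hn.
have step1 k v0 r : 0 < r -> exists v, nrm (v - v0) < r /\ ~ E k v.
  move=> r0; apply: NNPP => hno; apply: Hn; exists k, v0, r; split => // v hv.
  by apply: NNPP => hE; apply: hno; exists v.
have step (kp : nat * (W * R)) : exists b : W * R,
    0 < kp.2.2 -> [/\ 0 < b.2, b.2 <= kp.2.2 / 2, nrm (b.1 - kp.2.1) <= kp.2.2 / 2 &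
                   forall w, nrm (w - b.1) < 2 * b.2 -> ~ E kp.1 w].
  case: kp => k [v0 r] /=.
  have [r0|r0] := ltP 0 r; last by exists (v0, r) => h; exfalso; lra.
  have r2 : 0 < r / 2 by rewrite divr_gt0.
  have [v [hv nE]] := step1 k v0 (r / 2) r2.
  have [rho [rho0 Hrho]] := closed_nbhs (Ecl k) nE.
  exists (v, if rho / 2 <= r / 2 then rho / 2 else r / 2) => _ /=.
  case: ifP => hc; split => //; try lra; try (by rewrite divr_gt0).
    by move=> w hw; apply: Hrho; lra.
  by move=> w hw; apply: Hrho; move/negbT: hc; rewrite -ltNge => hc; lra.
have [f Hf] := fchoice step.
pose sq := fix g (n : nat) : W * R := if n is k.+1 then f (k, g k) else (0, 1).
have sqS k : sq k.+1 = f (k, sq k) by [].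
have pos k : 0 < (sq k).2.
  by elim: k => [|k IH] //=; have [] := Hf (k, sq k) IH.
have Pk k := Hf (k, sq k) (pos k).
have rad k : (sq k).2 <= (k.+1%:R)^-1.
  elim: k => [|k IH]; first by rewrite /= invr1.
  have [_ h _ _] := Pk k; rewrite sqS.
  apply: (le_trans h); apply: le_trans (_ : (k.+1%:R)^-1 / 2 <= _).
    by rewrite ler_pM2r // invr_gt0.
  rewrite -invfM lef_pV2 ?posrE ?mulr_gt0 ?ltr0Sn //.
  by rewrite -natrM ler_nat muln2 -addnn addSn ltnS leq_addl.
have nest k j : nrm ((sq (k + j)%N).1 - (sq k).1) <= (sq k).2 - (sq (k + j)%N).2.
  elim: j => [|j IH]; first by rewrite addn0 !subrr nrm0.
  rewrite addnS sqS.
  have [_ h1 h2 _] := Pk (k + j)%N.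
  have := nrmD ((f (k + j, sq (k + j)%N)).1 - (sq (k + j)%N).1) ((sq (k + j)%N).1 - (sq k).1).
  rewrite addrA subrK; lra.
have nest' k n : (k <= n)%N -> nrm ((sq n).1 - (sq k).1) < (k.+1%:R)^-1.
  move=> /subnKC <-; have := nest k (n - k)%N; have := pos (k + (n - k)%N)%N; have := rad k.
  move: (k.+1%:R)^-1 => c; lra.
have cau : cauchy (fun n => (sq n).1).
  move=> e e0; have e2 : 0 < e / 2 by rewrite divr_gt0.
  have [N HN] := archi1 e2; exists N => n m hn hm.
  have := nrmD ((sq n).1 - (sq N).1) ((sq N).1 - (sq m).1); rewrite addrA subrK.
  have := nest' N n hn; have := nest' N m hm; rewrite nrmB; have := HN N (leqnn N).
  move: (N.+1%:R)^-1 => c; lra.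
have [v hv] := Hc _ cau.
have [k Ek] := Ecov v.
have [_ _ _ Hk] := Pk k.
apply: (Hk v) => //; rewrite -sqS.
have : nrm (v - (sq k.+1).1) <= (sq k.+1).2.
  apply: small_le => e e0.
  have [N HN] := hv _ e0.
  have := HN (maxn N k.+1) (leq_maxl _ _).
  have := nest k.+1 (maxn N k.+1 - k.+1)%N; rewrite subnKC ?leq_maxr //.
  have := pos (maxn N k.+1).
  have := nrmD (v - (sq (maxn N k.+1)).1) ((sq (maxn N k.+1)).1 - (sq k.+1).1).
  rewrite addrA subrK nrmB; lra.
have := pos k.+1; lra.
Qed.

Lemma ubp (Hc : forall u, cauchy u -> exists x, cv u x) (F : W -> Prop) :
  (forall v, exists M, forall a, F a -> normc (ip v a) <= M) ->
  exists C, forall a, F a -> nrm a <= C.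
Proof.
move=> hF.
pose E k v := forall a, F a -> normc (ip v a) <= k%:R.
have Ecl k : closed_set ip (E k).
  move=> u x hu /cvP hx a Fa.
  apply: (cvc_le (cv_ipl a hx)) => n; exact: hu.
have Ecov v : exists k, E k v.
  have [M HM] := hF v; exists (Num.truncn M).+1 => a Fa.
  exact: le_trans (HM a Fa) (ltW (truncnS_gt M)).
have [k [v0 [r [r0 Hr]]]] := baire Hc Ecl Ecov.
have k0 : 0 <= k%:R :> R by [].
exists (4 * k%:R / r) => a Fa.
have hb v : nrm v < r -> normc (ip v a) <= 2 * k%:R.
  move=> hv.
  have h1 : E k (v + v0) by apply: Hr; rewrite addrK.
  have h2 : E k v0 by apply: Hr; rewrite subrr nrm0.
  have -> : ip v a = ip (v + v0) a - ip v0 a by rewrite ipDl addrK.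
  have := normcB (ip (v + v0) a) (ip v0 a); have := h1 a Fa; have := h2 a Fa; lra.
have [a0|an] := eqVneq (nrm a) 0.
  by rewrite a0 divr_ge0 ?mulr_ge0 // ltW.
have na : 0 < nrm a by rewrite lt_def an nrm_ge0.
pose c := r / (2 * nrm a).
have c0 : 0 < c by rewrite divr_gt0 // mulr_gt0.
have e1 : c * nrm a = r / 2 by rewrite /c; field; apply/eqP; lra.
have hv : nrm (c%:C *: a) < r.
  by rewrite nrmZ normcR ger0_norm ?(ltW c0) // e1; lra.
have := hb _ hv.
have -> : normc (ip (c%:C *: a) a) = c * nrm a ^+ 2.
  rewrite ipZl ipxx -cRM normcR ger0_norm ?nrm2 //.
  by rewrite mulr_ge0 ?(ltW c0) ?nn_ge0.
rewrite expr2 mulrA e1 => h.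
rewrite ler_pdivlMr //; nra.
Qed.

End Gen.

Section Prod.
Variables (R : realType) (V : lmodType R[i]) (ip : V -> V -> R[i]).
Hypothesis Hip : is_inner_product ip.

Definition ip2 (p q : V * V) : R[i] := ip p.1 q.1 + ip p.2 q.2.

Lemma ip2_inner : is_inner_product ip2.
Proof.
split.
- move=> a [x1 x2] [y1 y2] [z1 z2]; rewrite /ip2 /=.
  rewrite !(ip_linear Hip); ring.
- move=> [x1 x2] [y1 y2]; rewrite /ip2 /= cjD -!(ipC Hip); by [].
- move=> [x1 x2]; rewrite /ip2 /=; apply: addr_ge0; exact: ip_ge0.
- move=> [x1 x2]; rewrite /ip2 /= !(ipxx Hip) -cRD => /complexI h.
  have h1 := nn_ge0 Hip x1; have h2 := nn_ge0 Hip x2.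
  have e1 : nn ip x1 = 0 by lra.
  have e2 : nn ip x2 = 0 by lra.
  by rewrite (nn_eq0 Hip e1) (nn_eq0 Hip e2).
Qed.

Lemma nn2E p : nn ip2 p = nn ip p.1 + nn ip p.2.
Proof. by rewrite /nn /ip2 ReD. Qed.

Lemma nrm2_fst p : nrm ip p.1 <= nrm ip2 p.
Proof. by rewrite /nrm ler_wsqrtr // nn2E lerDl nn_ge0. Qed.
Lemma nrm2_snd p : nrm ip p.2 <= nrm ip2 p.
Proof. by rewrite /nrm ler_wsqrtr // nn2E lerDr nn_ge0. Qed.
Lemma nrm2_le p : nrm ip2 p <= nrm ip p.1 + nrm ip p.2.
Proof.
have h1 := nrm_ge0 ip p.1; have h2 := nrm_ge0 ip p.2; have h3 := nrm_ge0 ip2 p.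
have : nrm ip2 p ^+ 2 = nrm ip p.1 ^+ 2 + nrm ip p.2 ^+ 2.
  by rewrite (nrm2 ip2_inner) !(nrm2 Hip) nn2E.
nra.
Qed.

Lemma cv2_fst u x : cv ip2 u x -> cv ip (fun n => (u n).1) x.1.
Proof.
move=> h e /h [N HN]; exists N => n /HN; exact: le_lt_trans (nrm2_fst _).
Qed.
Lemma cv2_snd u x : cv ip2 u x -> cv ip (fun n => (u n).2) x.2.
Proof.
move=> h e /h [N HN]; exists N => n /HN; exact: le_lt_trans (nrm2_snd _).
Qed.
Lemma cv2_pair u x : cv ip (fun n => (u n).1) x.1 -> cv ip (fun n => (u n).2) x.2 -> cv ip2 u x.
Proof.
move=> h1 h2 e e0; have e2 : 0 < e / 2 by rewrite divr_gt0.
have [N1 H1] := h1 _ e2; have [N2 H2] := h2 _ e2.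
exists (maxn N1 N2) => n hn.
have a1 := H1 n (leq_trans (leq_maxl _ _) hn).
have a2 := H2 n (leq_trans (leq_maxr _ _) hn).
have := nrm2_le (u n - x); rewrite /=; lra.
Qed.

Lemma complete2 (Hc : forall u, cauchy ip u -> exists x, cv ip u x) :
  forall u, cauchy ip2 u -> exists x, cv ip2 u x.
Proof.
move=> u hu.
have c1 : cauchy ip (fun n => (u n).1).
  move=> e /hu [N HN]; exists N => n m a b; exact: le_lt_trans (nrm2_fst _) (HN n m a b).
have c2 : cauchy ip (fun n => (u n).2).
  move=> e /hu [N HN]; exists N => n m a b; exact: le_lt_trans (nrm2_snd _) (HN n m a b).
have [x1 h1] := Hc _ c1; have [x2 h2] := Hc _ c2.
by exists (x1, x2); apply: cv2_pair.
Qed.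

End Prod.

Section Adj.
Variables (R : realType) (V : lmodType R[i]) (ip : V -> V -> R[i]).
Hypothesis Hip : is_inner_product ip.

Lemma adj_0 (B : op V) : adjoint ip B 0 0.
Proof. by move=> x w _; rewrite !(ip0r Hip). Qed.

Lemma adj_D (B : op V) y z y' z' : adjoint ip B y z -> adjoint ip B y' z' ->
  adjoint ip B (y + y') (z + z').
Proof. by move=> h h' x w hB; rewrite !(ipDr Hip) (h _ _ hB) (h' _ _ hB). Qed.

Lemma adj_Z (B : op V) c y z : adjoint ip B y z -> adjoint ip B (c *: y) (c *: z).
Proof. by move=> h x w hB; rewrite !(ipZr Hip) (h _ _ hB). Qed.

Lemma adj_B (B : op V) y z y' z' : adjoint ip B y z -> adjoint ip B y' z' ->
  adjoint ip B (y - y') (z - z').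
Proof. by move=> h h'; apply: adj_D h _; rewrite -(scaleN1r y') -(scaleN1r z'); apply: adj_Z. Qed.

Lemma linB (B : op V) : linear_op B -> forall y z y' z', B y z -> B y' z' -> B (y - y') (z - z').
Proof.
move=> [_ [BD [BZ _]]] y z y' z' h h'; apply: BD h _; rewrite -(scaleN1r y') -(scaleN1r z'); exact: BZ.
Qed.

Definition perp_sub (S : V -> Prop) : subspace (perp ip S).
Proof.
split; first by move=> x _; rewrite (ip0r Hip).
split; first by move=> a b ha hb x Sx; rewrite (ipDr Hip) ha // hb // addr0.
by move=> c a ha x Sx; rewrite (ipZr Hip) ha // mulr0.
Qed.

Lemma perpB (S : V -> Prop) a b : perp ip S a -> perp ip S b -> perp ip S (a - b).
Proof. by move=> ha hb x Sx; rewrite (ipBr Hip) ha // hb // subrr. Qed.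

Lemma perp_self (S : V -> Prop) a : S a -> perp ip S a -> a = 0.
Proof. by move=> Sa pa; apply: (ip_eq0 Hip); exact: pa. Qed.

Lemma range_sub (B : op V) : linear_op B -> subspace (range B).
Proof.
move=> [B0 [BD [BZ _]]]; split; first by exists 0.
split; first by move=> a b [x hx] [y hy]; exists (x + y); apply: BD.
by move=> c a [x hx]; exists (c *: x); apply: BZ.
Qed.

End Adj.

Section Op.
Variables (R : realType) (V : lmodType R[i]) (ip : V -> V -> R[i]) (T : op V).
Hypothesis Hh : is_hilbert ip.
Hypothesis HT : closed_op ip T.
Hypothesis Hd : densely_defined ip T.
Hypothesis Hr : closed_range ip T.
Local Notation normc := (@Normc.normc R).
Local Notation A := (adjoint ip T).
Local Notation AA := (adjoint ip (adjoint ip T)).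

Let Hip : is_inner_product ip := proj1 Hh.
Let Hc : forall u, cauchy ip u -> exists x, cv ip u x.
Proof. by move=> u /(cauchyP Hip) /(proj2 Hh) [x /(cvP Hip) hx]; exists x. Qed.

Let Tlin : linear_op T := proj1 HT.
Let T0 : T 0 0 := proj1 Tlin.
Let TD : forall x y x' y', T x y -> T x' y' -> T (x + x') (y + y') := proj1 (proj2 Tlin).
Let TZ : forall (a : R[i]) x y, T x y -> T (a *: x) (a *: y) := proj1 (proj2 (proj2 Tlin)).
Let Tfun : forall x y y', T x y -> T x y' -> y = y' := proj2 (proj2 (proj2 Tlin)).
Let TB := linB Tlin.

Lemma dense_zero y : (forall x, dom T x -> ip x y = 0) -> y = 0.
Proof.
move=> h; have [u [hu /(cvP Hip) cu]] := Hd y.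
apply: (ip_eq0 Hip); apply: (Normc.eq0_normc (R:=R)); apply/eqP; rewrite eq_le normc_ge0 andbT.
by apply: (cvc_le (cv_ipl Hip y cu)) => n; rewrite h // (@Normc.normc0 R).
Qed.

Lemma Afun y z z' : A y z -> A y z' -> z = z'.
Proof.
move=> h h'; apply/eqP; rewrite -subr_eq0; apply/eqP; apply: dense_zero => x [w hw].
by rewrite (ipBr Hip) -(h _ _ hw) -(h' _ _ hw) subrr.
Qed.

Lemma Alin : linear_op A.
Proof.
split; first exact: (adj_0 Hip).
split; first by move=> *; apply: (adj_D Hip).
split; first by move=> *; apply: (adj_Z Hip).
exact: Afun.
Qed.

Let AB := linB Alin.

Lemma A_closed u v y z : (forall n, A (u n) (v n)) -> cv ip u y -> cv ip v z -> A y z.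
Proof.
move=> h cu cv x w hw.
apply: (cvc_uniq (cv_ipr Hip w cu)).
apply: cvc_ext (cv_ipr Hip x cv) => n.
by rewrite (h n x w hw).
Qed.

Lemma T_AA x w : T x w -> AA x w.
Proof. by move=> hT a c hA; rewrite (ipC Hip) -(hA _ _ hT) -(ipC Hip). Qed.

Lemma AA_T y z : AA y z -> T y z.
Proof.
move=> hAA.
pose G := fun p : V * V => T p.1 p.2.
have Gsub : subspace G.
  split; first exact: T0.
  split; first by move=> [a1 a2] [b1 b2]; exact: TD.
  by move=> c [a1 a2]; exact: TZ.
have Gcl : closed_set (ip2 ip) G.
  move=> u x hu /(cvP (ip2_inner Hip)) hx.
  apply: (proj2 HT (fun n => (u n).1) (fun n => (u n).2)) => //.
    by apply/(cvP Hip); exact: cv2_fst hx.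
  by apply/(cvP Hip); exact: cv2_snd hx.
have [[x w] [Gs hperp]] := proj_thm (ip2_inner Hip) (complete2 Hip Hc) Gsub Gcl (y, z).
rewrite /G /= in Gs.
set p0 := y - x; set q0 := z - w.
have eq1 x' w' : T x' w' -> ip x' p0 + ip w' q0 = 0.
  by move=> hT; have := hperp (x', w') hT.
have hA : A q0 (- p0).
  move=> x' w' hT; rewrite (ipNr Hip); apply/eqP; rewrite -subr_eq0 opprK addrC.
  by apply/eqP; apply: eq1.
have hAA2 : AA p0 q0 by apply: (adj_B Hip) => //; apply: T_AA.
have := hAA2 _ _ hA; rewrite (ipNl Hip) !(ipxx Hip) -cRN => /complexI h.
have n1 := nn_ge0 Hip p0; have n2 := nn_ge0 Hip q0.
have e1 : nn ip p0 = 0 by lra.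
have e2 : nn ip q0 = 0 by lra.
have /eqP := nn_eq0 Hip e1; rewrite subr_eq0 => /eqP ->.
have /eqP := nn_eq0 Hip e2; rewrite subr_eq0 => /eqP ->.
exact: Gs.
Qed.

Lemma kerA y : A y 0 <-> perp ip (range T) y.
Proof.
split.
  by move=> h k [x hx]; rewrite (h _ _ hx) (ip0r Hip).
by move=> h x w hx; rewrite (ip0r Hip); apply: h; exists x.
Qed.

Lemma kerT y : T y 0 <-> perp ip (range A) y.
Proof.
split.
  by move=> h c [a ha]; have := T_AA h ha; rewrite (ip0r Hip).
move=> h; apply: AA_T => a c ha; rewrite (ip0r Hip); apply: h; by exists a.
Qed.

Lemma projK v : exists k, range T k /\ perp ip (range T) (v - k).
Proof. exact: (proj_thm Hip Hc (range_sub Tlin) Hr). Qed.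


Lemma A_below : exists C, 0 < C /\ forall a c, range T a -> A a c -> nrm ip a <= C * nrm ip c.
Proof.
pose F := fun a => range T a /\ exists c, A a c /\ nrm ip c <= 1.
have hF : forall v, exists M, forall a, F a -> normc (ip v a) <= M.
  move=> v; have [k [[x hx] hk]] := projK v.
  exists (nrm ip x) => a [Ka [c [hac hc]]].
  have -> : ip v a = ip k a.
    have -> : v = k + (v - k) by rewrite addrC subrK.
    by rewrite (ipDl Hip) (ipC Hip a (v - k)) (hk _ Ka) conjc0 addr0.
  rewrite (hac _ _ hx); apply: le_trans (CS Hip _ _) _.
  have := nrm_ge0 ip x; have := nrm_ge0 ip c; nra.
have [C HC] := ubp Hip Hc hF.
exists (`|C| + 1); split; first by rewrite ltr_wpDl.
move=> a c Ka hac.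
have [c0|cn] := eqVneq (nrm ip c) 0.
  have := nrm_eq0 Hip c0 => ez; rewrite ez in hac.
  have := (proj1 (kerA a) hac); move/(perp_self Hip Ka) => ->.
  by rewrite c0 mulr0 (nrm0 Hip).
have nc : 0 < nrm ip c by rewrite lt_def cn nrm_ge0.
pose l := (nrm ip c)^-1.
have l0 : 0 < l by rewrite invr_gt0.
have := HC (l%:C *: a).
rewrite (nrmZ Hip) normcR ger0_norm ?(ltW l0) //.
have hF' : F (l%:C *: a).
  split; first by apply: (proj2 (proj2 (range_sub Tlin))).
  exists (l%:C *: c); split; first by apply: (adj_Z Hip).
  rewrite (nrmZ Hip) normcR ger0_norm ?(ltW l0) // /l mulVf //.
move=> /(_ hF') h.
have hCa : C <= `|C| by exact: ler_norm.
have e : nrm ip a = l * nrm ip a * nrm ip c by rewrite /l mulrAC mulVf ?mul1r.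
rewrite e; have := nrm_ge0 ip a; have := nrm_ge0 ip c; nra.
Qed.

Lemma rangeA_closed : closed_set ip (range A).
Proof.
move=> u h hu /(cvP Hip) cu.
have ex n : exists k, range T k /\ A k (u n).
  have [a ha] := hu n; have [k [Kk pk]] := projK a.
  exists k; split => //.
  have := AB ha (proj2 (kerA (a - k)) pk).
  by rewrite opprB addrC subrK subr0.
have [f Hf] := fchoice ex.
have [C [C0 HC]] := A_below.
have cauf : cauchy ip f.
  move=> e e0; have eC : 0 < e / C by rewrite divr_gt0.
  have [N HN] := cv_cauchy Hip cu eC; exists N => n m hn hm.
  have hK : range T (f n - f m).
    apply: (proj1 (proj2 (range_sub Tlin))); first exact: proj1 (Hf n).
    rewrite -scaleN1r; apply: (proj2 (proj2 (range_sub Tlin))); exact: proj1 (Hf m).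
  have := HC _ _ hK (AB (proj2 (Hf n)) (proj2 (Hf m))).
  have := HN n m hn hm.
  rewrite ltr_pdivlMr // => h1 h2.
  by apply: le_lt_trans h2 _; rewrite mulrC.
have [a ha] := Hc (u:=f) cauf.
exists a; apply: (A_closed (u := f) (v := u)) => // n; exact: proj2 (Hf n).
Qed.

Lemma projKs v : exists s, range A s /\ perp ip (range A) (v - s).
Proof. exact: (proj_thm Hip Hc (range_sub Alin) rangeA_closed). Qed.


Definition Pf (v : V) : V := proj1_sig (constructive_indefinite_description _ (projKs v)).

Lemma PfP v : range A (Pf v) /\ perp ip (range A) (v - Pf v).
Proof. exact: (proj2_sig (constructive_indefinite_description _ (projKs v))). Qed.

Let KsD := proj1 (proj2 (range_sub Alin)).
Let KsZ := proj2 (proj2 (range_sub Alin)).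
Lemma KsB a b : range A a -> range A b -> range A (a - b).
Proof. by move=> ha hb; apply: KsD ha _; rewrite -scaleN1r; apply: KsZ. Qed.

Lemma Pf_uniq s v : range A s -> perp ip (range A) (v - s) -> s = Pf v.
Proof.
move=> hs hp; have [h1 h2] := PfP v.
apply/eqP; rewrite -subr_eq0; apply/eqP; apply: (perp_self Hip (KsB hs h1)).
have := perpB Hip h2 hp.
by rewrite opprB addrC addrA subrK.
Qed.

Lemma Pf_id s : range A s -> Pf s = s.
Proof.
move=> hs; symmetry; apply: Pf_uniq => //.
by rewrite subrr; move=> x _; rewrite (ip0r Hip).
Qed.

Lemma Pf_B a b : Pf (a - b) = Pf a - Pf b.
Proof.
symmetry; apply: Pf_uniq; first by apply: KsB; [exact: (proj1 (PfP a)) | exact: (proj1 (PfP b))].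
have := perpB Hip (proj2 (PfP a)) (proj2 (PfP b)).
have -> : a - b - (Pf a - Pf b) = a - Pf a - (b - Pf b) by rewrite !opprB addrACA [RHS]addrACA [- b + _]addrC.
by [].
Qed.

Lemma Pf_nrm v : nrm ip (Pf v) <= nrm ip v.
Proof.
have [h1 h2] := PfP v.
have e := nnD Hip (Pf v) (v - Pf v).
rewrite addrC subrK (h2 _ h1) /= mulr0 addr0 in e.
rewrite /nrm ler_wsqrtr // e lerDl; exact: nn_ge0.
Qed.

Lemma Pf_cv u x : cv ip u x -> cv ip (fun n => Pf (u n)) (Pf x).
Proof.
move=> h e /h [N HN]; exists N => n /HN hn.
by rewrite -Pf_B; exact: le_lt_trans (Pf_nrm _) hn.
Qed.

Lemma rangeB y : range (op_mul A T) y <-> range A y.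
Proof.
split; first by move=> [x [w [_ h]]]; exists w.
move=> [a ha]; have [k [[b hb] pk]] := projK a.
exists b, k; split => //.
have := AB ha (proj2 (kerA (a - k)) pk).
by rewrite opprB addrC subrK subr0.
Qed.

Lemma part3 y z : op_mul (op_mul T A) (cauchy_dual ip T) y z <-> T y z.
Proof.
split.
- move=> [a [[b [[y1 [y2 [Ey [hr1 [hp2 [[a' [hba' hay1]] hkb]]]]]] hba]] [c [hac hcz]]]].
  have ea := Tfun hba' hba; subst a'.
  have ec := Afun hac hay1; subst c.
  have hy2 : T y2 0.
    apply/kerT => s hs; apply: hp2; exact/rangeB.
  by rewrite Ey -(addr0 z); apply: TD.
- move=> hyz.
  have [y1 [hy1 hp]] := projKs y.
  have hT2 : T (y - y1) 0 by apply/kerT.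
  have hT1 : T y1 z.
    have := TB hyz hT2; by rewrite opprB addrC subrK subr0.
  have [a ha] := hy1.
  have [k [[b hb] pk]] := projK a.
  have hk : A k y1.
    have := AB ha (proj2 (kerA (a - k)) pk).
    by rewrite opprB addrC subrK subr0.
  have [b1 [hb1 pb]] := projKs b.
  have hb1k : T b1 k.
    have := TB hb (proj2 (kerT (b - b1)) pb).
    by rewrite opprB addrC subrK subr0.
  exists k; split; last by exists y1.
  exists b1; split => //.
  exists y1, (y - y1); split; first by rewrite addrC subrK.
  split; first by exists b1, k.
  split; first by move=> s hs; apply: hp; exact/rangeB.
  split; first by exists k.
  move=> x [y' [hxy' hy'0]].
  have hy'z : y' = 0.
    apply: (ip_eq0 Hip); have := hy'0 _ _ hxy'.
    by rewrite (ip0r Hip) => <-.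
  subst y'.
  have [e he] := hb1.
  by rewrite -(he _ _ hxy') (ip0l Hip).
Qed.

Local Notation Q := (op_mul (cauchy_dual ip A) T).

Lemma Qchar x z : Q x z <-> dom T x /\ z = Pf x.
Proof.
split.
- move=> [v [hxv [m [[v1 [v2 [Ev [hr1 [hp2 [[y' [hmy' hy'v1]] hkm]]]]]] hmz]]]].
  have hv1 : range T v1 by move: hr1 => [x' [y'' [_ h]]]; exists y''; exact: AA_T.
  have hv : range T v by exists x.
  have hv2K : range T v2.
    have -> : v2 = v - v1 by rewrite Ev addrC addKr.
    apply: (proj1 (proj2 (range_sub Tlin))) hv _; rewrite -scaleN1r.
    exact: (proj2 (proj2 (range_sub Tlin))).
  have hv2B : range (op_mul AA A) v2.
    move: hv2K => [w hw]; have [w1 [hw1 pw]] := projKs w.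
    have hw1k : T w1 v2.
      have := TB hw (proj2 (kerT (w - w1)) pw).
      by rewrite opprB addrC subrK subr0.
    move: hw1 => [e he]; exists e, w1; split => //; exact: T_AA hw1k.
  have v20 : v2 = 0 by apply: (ip_eq0 Hip); exact: hp2.
  rewrite v20 addr0 in Ev; subst v1.
  have Ty'v := AA_T hy'v1.
  have ey := Afun hmy' hmz; subst y'.
  split; first by exists v.
  apply: Pf_uniq; first by exists m.
  apply/kerT; have := TB hxv Ty'v; by rewrite subrr.
- move=> [[w hw] ->].
  have [h1 h2] := PfP x.
  have hT0 : T (x - Pf x) 0 by apply/kerT.
  have hTw : T (Pf x) w.
    have := TB hw hT0; by rewrite opprB addrC subrK subr0.
  have [m0 hm0] := h1.
  have [m1 [hm1 pm]] := projK m0.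
  have hA1 : A m1 (Pf x).
    have := AB hm0 (proj2 (kerA (m0 - m1)) pm).
    by rewrite opprB addrC subrK subr0.
  exists w; split => //.
  exists m1; split => //.
  exists w, 0; split; first by rewrite addr0.
  split; first by exists m1, (Pf x); split => //; exact: T_AA.
  split; first by move=> s _; rewrite (ip0r Hip).
  split; first by exists (Pf x); split => //; exact: T_AA.
  move=> x' [y'' [hx'y hy0]].
  have Ty0 := AA_T hy0.
  have ey : y'' = 0.
    apply: (ip_eq0 Hip); have := hx'y _ _ Ty0.
    by rewrite (ip0l Hip) => <-.
  subst y''.
  by rewrite (ipC Hip m1 x') ((proj1 (kerA x')) hx'y _ hm1) conjc0.
Qed.

Lemma closQ u z : closure_op ip Q u z <-> z = Pf u.
Proof.
split.
- move=> [xs [ys [hQ [/(cvP Hip) cx /(cvP Hip) cy]]]].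
  apply: (cv_uniq Hip cy); apply: cv_ext (Pf_cv cx) => n.
  by rewrite (proj2 (proj1 (Qchar _ _) (hQ n))).
- move=> ->; have [xs [hxs cx]] := Hd u.
  exists xs, (fun n => Pf (xs n)); split; first by move=> n; apply/Qchar.
  split => //; apply/(cvP Hip); apply: Pf_cv; exact/(cvP Hip).
Qed.

Lemma part2 y z : op_mul (closure_op ip Q) A y z <-> A y z.
Proof.
split.
- move=> [u [hyu /closQ ->]].
  by rewrite Pf_id //; exists y.
- move=> h; exists z; split => //; apply/closQ.
  by rewrite Pf_id //; exists y.
Qed.

End Op.

Theorem theorem2p2 (R : realType) (V : lmodType R[i]) (ip : V -> V -> R[i])
  (T : op V) :
  is_hilbert ip ->
  closed_op ip T -> densely_defined ip T -> closed_range ip T ->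
  (selfadjoint ip T <->
     op_eq T (op_mul (closure_op ip (op_mul (cauchy_dual ip (adjoint ip T)) T))
                     (adjoint ip T))) /\
  (selfadjoint ip T <->
     op_eq (adjoint ip T) (op_mul (op_mul T (adjoint ip T)) (cauchy_dual ip T))).
Proof.
move=> Hh HT Hd Hr.
have p2 := part2 Hh HT Hd Hr.
have p3 := part3 Hh HT Hd Hr.
split; split.
- move=> hsa x y; split => h.
    by apply/p2; apply/hsa.
  by apply/hsa; apply/p2.
- move=> h x y; split => h'.
    by apply/p2; apply/h.
  by apply/h; apply/p2.
- move=> hsa x y; split => h'.
    by apply/p3; apply/hsa.
  by apply/hsa; apply/p3.
- move=> h x y; split => h'.
    by apply/h; apply/p3.
  by apply/p3; apply/h.
Qed.
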